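(* Under the standing assumptions below, for $k,h\ge1$ let $\widetilde{X'_k}(h)$ be defined recursively by $$\widetilde{X'_k}(h)=-\sum_{j=1}^{h-1}a_j\,\widetilde{X'_k}(h-j)-\sum_{j=1}^{k}a_{h-1+j}X_{k+1-j}.$$ Then for every $\delta>0$, $$\mathbb E\big[(\widetilde{X'_k}(h)-X_{k+h})^2\big]=\sigma_\varepsilon^2\sum_{l=0}^{h-1}b_l^2+O\big(h^{2d+\delta}k^{-1+\delta}\big).$$ That is, there is a constant $C_\delta$ such that the absolute value of the difference between the left side and $\sigma_\varepsilon^2\sum_{l=0}^{h-1}b_l^2$ is at most $C_\delta h^{2d+\delta}k^{-1+\delta}$ for all $k,h\ge1$.
   Context: Standing assumptions. Let $(X_n)_{n\in\mathbb Z}$ be a real, zero-mean, weakly stationary process in $L^2$ with autocovariance function $\sigma(j)=\mathbb E[X_nX_{n+j}]$, satisfying $\sum_{j\in\mathbb Z}|\sigma(j)|=\infty$. Assume $X_n=\sum_{j\ge0}b_j\varepsilon_{n-j}$ (convergence in $L^2$). Here $(\varepsilon_n)_{n\in\mathbb Z}$ is a sequence of uncorrelated random variables with mean $0$ and variance $\sigma_\varepsilon^2>0$, and $b_0=1$, $\sum_j b_j^2<\infty$. Assume also $\varepsilon_n=\sum_{j\ge0}a_jX_{n-j}$ with $a_0=1$ and $\sum_j|a_j|<\infty$. The power series $A(z)=\sum_{j\ge0}a_jz^j$ and $B(z)=\sum_{j\ge0}b_jz^j$ satisfy $A(z)B(z)=1$ for $|z|\le1$. Fix $d\in(0,1/2)$.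 Assume that for every $\delta>0$ there exist constants $C_1,C_2$ (depending on $\delta$) such that $|a_j|\le C_1j^{-d-1+\delta}$ and $|b_j|\le C_2j^{d-1+\delta}$ for all $j\ge1$. *)

(* Defs.v *)
From Stdlib Require Import Reals Lra Lia ZArith Arith.
Open Scope R_scope.

(* L^2(Omega, F, P) of a probability
   space, with E[U V] as inner product, is an instance (the inner product is
   only positive SEMI-definite, so no quotient by null functions is needed). *)
Record IPSpace := {
  car :> Type;
  vzero : car;
  vadd : car -> car -> car;
  vopp : car -> car;
  vscal : R -> car -> car;
  ip : car -> car -> R;
  vadd_assoc : forall x y z, vadd x (vadd y z) = vadd (vadd x y) z;
  vadd_comm : forall x y, vadd x y = vadd y x;
  vadd_0 : forall x, vadd x vzero = x;
  vadd_opp : forall x, vadd x (vopp x) = vzero;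
  vscal_1 : forall x, vscal 1 x = x;
  vscal_assoc : forall c e x, vscal c (vscal e x) = vscal (c * e) x;
  vscal_distr_v : forall c x y, vscal c (vadd x y) = vadd (vscal c x) (vscal c y);
  vscal_distr_s : forall c e x, vscal (c + e) x = vadd (vscal c x) (vscal e x);
  ip_sym : forall x y, ip x y = ip y x;
  ip_add_l : forall x y z, ip (vadd x y) z = ip x z + ip y z;
  ip_scal_l : forall c x z, ip (vscal c x) z = c * ip x z;
  ip_pos : forall x, 0 <= ip x x
}.

Arguments vzero {_}.
Arguments vadd {_}.
Arguments vopp {_}.
Arguments vscal {_}.
Arguments ip {_}.

Definition vsub {H : IPSpace} (x y : H) : H := vadd x (vopp y).

Definition msq {H : IPSpace} (x : H) : R := ip x x.

Fixpoint vsumn {H : IPSpace} (f : nat -> H) (n : nat) : H :=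
  match n with
  | O => vzero
  | S m => vadd (vsumn f m) (f m)
  end.

(* One step of the recursion: given the values P 1, ..., P (h-1),
   returns  - sum_{j=1}^{h-1} a_j P(h-j) - sum_{j=1}^{k} a_{h-1+j} X_{k+1-j}. *)
Definition pred_step {H : IPSpace} (a : nat -> R) (X : Z -> H) (k h : nat)
    (P : nat -> H) : H :=
  vsub (vopp (vsumn (fun i => vscal (a (S i)) (P (h - S i)%nat)) (h - 1)))
       (vsumn (fun i => vscal (a (h + i)%nat) (X (Z.of_nat k - Z.of_nat i)%Z)) k).

(* predF a X k n h = the predictor X'_k~(h) for 1 <= h <= n. *)
Fixpoint predF {H : IPSpace} (a : nat -> R) (X : Z -> H) (k n : nat) : nat -> H :=
  match n with
  | O => fun _ => vzero
  | S m => let P := predF a X k m in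
           fun h => if (h <=? m)%nat then P h else pred_step a X k h P
  end.

Definition predictor {H : IPSpace} (a : nat -> R) (X : Z -> H) (k h : nat) : H :=
  predF a X k h h.

(* Main.v *)
Require Import Defs.
From Stdlib Require Import Reals Lra Lia ZArith Arith.
Open Scope R_scope.

Fixpoint rsum (f : nat -> R) (n : nat) : R :=
  match n with O => 0 | S m => rsum f m + f m end.

Lemma rpow_pos x e : 0 < Rpower x e.
Proof. unfold Rpower; apply exp_pos. Qed.

Lemma rpow_dec x y e : 0 < x <= y -> e <= 0 -> Rpower y e <= Rpower x e.
Proof.
  intros Hxy He. set (f := -e).
  assert (E: e = - f) by (unfold f; ring). rewrite E, !Rpower_Ropp.
  apply Rinv_le_contravar. apply rpow_pos. apply Rle_Rpower_l; unfold f; lra.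
Qed.

Lemma rpow_inc_exp e n m : 1 <= e -> n <= m -> Rpower e n <= Rpower e m.
Proof. apply Rle_Rpower. Qed.

Lemma maxtrick x y z al ga : 0 < x <= z -> 0 < y <= z -> 0 <= al -> 0 <= ga ->
  Rpower z (- (al + ga)) <= Rpower x (- al) * Rpower y (- ga).
Proof.
  intros. replace (- (al+ga)) with (-al + -ga) by ring. rewrite Rpower_plus.
  apply Rmult_le_compat; try (left; apply rpow_pos); apply rpow_dec; lra.
Qed.

Lemma key_tele x ep : 1 <= x -> 0 < ep ->
  Rpower (x+1) (-(1+ep)) * ep <= Rpower x (-ep) - Rpower (x+1) (-ep).
Proof.
  intros Hx Hep. set (y := x + 1).
  assert (Hy : 0 < y) by (unfold y; lra).
  assert (Hl : 1 - x / y <= ln y - ln x).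
  { pose proof (exp_ineq1_le (ln x - ln y)) as H.
    replace (ln x - ln y) with (ln x + - ln y) in H by ring.
    rewrite exp_plus, exp_Ropp, !exp_ln in H by lra. unfold Rdiv; lra. }
  assert (Hxy : 1 - x / y = / y) by (unfold y; field; lra).
  assert (E1 : Rpower x (-ep) = Rpower y (-ep) * exp (ep * (ln y - ln x))).
  { unfold Rpower. rewrite <- exp_plus. f_equal. ring. }
  assert (E2 : Rpower y (-(1+ep)) = Rpower y (-ep) * / y).
  { replace (-(1+ep)) with (-ep + Ropp 1) by ring. rewrite Rpower_plus, (Rpower_Ropp y 1), Rpower_1; auto. }
  rewrite E1, E2. pose proof (exp_ineq1_le (ep * (ln y - ln x))).
  pose proof (rpow_pos y (-ep)).
  assert (ep * / y <= ep * (ln y - ln x)) by (apply Rmult_le_compat_l; lra).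
  nra.
Qed.

Lemma psum_bound ep : 0 < ep -> forall n,
  rsum (fun j => Rpower (INR j + 1) (-(1+ep))) n <= 1 + / ep.
Proof.
  intros Hep.
  assert (H : forall n, rsum (fun j => Rpower (INR j + 1) (-(1+ep))) (S n)
     <= 1 + (1 - Rpower (INR n + 1) (-ep)) / ep).
  { induction n.
    - simpl. replace (0+1) with 1 by ring. unfold Rpower. rewrite ln_1, !Rmult_0_r, exp_0.
      unfold Rdiv. lra.
    - change (rsum (fun j => Rpower (INR j + 1) (-(1+ep))) (S (S n)))
        with (rsum (fun j => Rpower (INR j + 1) (-(1+ep))) (S n) + Rpower (INR (S n) + 1) (-(1+ep))).
      rewrite S_INR.
      pose proof (key_tele (INR n + 1) ep) as K.
      assert (1 <= INR n + 1) by (pose proof (pos_INR n); lra).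
      specialize (K H Hep).
      assert (Rpower (INR n + 1 + 1) (- (1 + ep)) <=
              (Rpower (INR n + 1) (-ep) - Rpower (INR n + 1 + 1) (-ep)) / ep).
      { apply (Rmult_le_reg_r ep); auto. unfold Rdiv. rewrite Rmult_assoc, Rinv_l; lra. }
      assert (E : 1 + (1 - Rpower (INR n + 1) (- ep)) / ep +
                 (Rpower (INR n + 1) (-ep) - Rpower (INR n + 1 + 1) (-ep)) / ep
               = 1 + (1 - Rpower (INR n + 1 + 1) (- ep)) / ep) by (field; lra).
      lra. }
  intros [|n]. simpl. assert (0 < / ep) by (apply Rinv_0_lt_compat; auto). lra.
  eapply Rle_trans. apply H. pose proof (rpow_pos (INR n + 1) (-ep)).
  unfold Rdiv. assert (0 < / ep) by (apply Rinv_0_lt_compat; auto). nra.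
Qed.

Lemma rsum_ext f g n : (forall i, (i < n)%nat -> f i = g i) -> rsum f n = rsum g n.
Proof. induction n; simpl; intros H; auto. rewrite IHn, H; auto. Qed.

Lemma rsum_le f g n : (forall i, (i < n)%nat -> f i <= g i) -> rsum f n <= rsum g n.
Proof. induction n; simpl; intros H. lra. apply Rplus_le_compat; auto. Qed.

Lemma rsum_nonneg f n : (forall i, (i < n)%nat -> 0 <= f i) -> 0 <= rsum f n.
Proof. induction n; simpl; intros H. lra. assert (0 <= f n) by (apply H; lia).
  assert (0 <= rsum f n) by (apply IHn; intros; apply H; lia). lra. Qed.

Lemma rsum_abs f n : Rabs (rsum f n) <= rsum (fun i => Rabs (f i)) n.
Proof. induction n; simpl. rewrite Rabs_R0; lra.
  eapply Rle_trans. apply Rabs_triang. lra. Qed.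

Lemma rsum_scal c f n : rsum (fun i => c * f i) n = c * rsum f n.
Proof. induction n; simpl. ring. rewrite IHn; ring. Qed.

Lemma rsum_plus f g n : rsum (fun i => f i + g i) n = rsum f n + rsum g n.
Proof. induction n; simpl. ring. rewrite IHn; ring. Qed.

Lemma rsum_zero f n : (forall i, (i < n)%nat -> f i = 0) -> rsum f n = 0.
Proof. intros H. rewrite (rsum_ext f (fun _ => 0)); auto. induction n; simpl; auto. rewrite IHn; auto. ring. Qed.

Lemma rsum_split f n m : rsum f (n + m) = rsum f n + rsum (fun i => f (n + i)%nat) m.
Proof. induction m; simpl. rewrite Nat.add_0_r; ring. rewrite Nat.add_succ_r; simpl. rewrite IHm; ring. Qed.

Lemma rsum_exch F n m : rsum (fun i => rsum (fun j => F i j) m) n = rsum (fun j => rsum (fun i => F i j) n) m.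
Proof. induction n; simpl. rewrite rsum_zero; auto. rewrite IHn, <- rsum_plus. reflexivity. Qed.

Lemma rsum_sum_f f n : rsum f (S n) = sum_f_R0 f n.
Proof. induction n; simpl. ring. simpl in IHn. rewrite <- IHn. ring. Qed.

Lemma rsum_mono_n f n m : (forall i, 0 <= f i) -> (n <= m)%nat -> rsum f n <= rsum f m.
Proof. intros H Hnm. replace m with (n + (m - n))%nat by lia. rewrite rsum_split.
  assert (0 <= rsum (fun i => f (n + i)%nat) (m - n)) by (apply rsum_nonneg; auto). lra. Qed.

Lemma psum_q q et h : 0 < et -> q <= 1 + et ->
  rsum (fun l => Rpower (INR l + 1) (- q)) h <= (1 + / et) * Rpower (INR h) (1 + et - q).
Proof.
  intros Het Hq.
  apply Rle_trans with (rsum (fun l => Rpower (INR l + 1) (-(1+et)) * Rpower (INR h) (1+et-q)) h).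
  - apply rsum_le. intros i Hi.
    replace (-q) with (-(1+et) + (1+et-q)) by ring. rewrite Rpower_plus.
    apply Rmult_le_compat_l. left; apply rpow_pos.
    destruct (Req_dec (1+et-q) 0) as [E|E]. rewrite E. unfold Rpower. rewrite !Rmult_0_l. lra.
    apply Rle_Rpower_l. lra. split. pose proof (pos_INR i); lra.
    assert (Hi' : (S i <= h)%nat) by lia. apply le_INR in Hi'. rewrite S_INR in Hi'. lra.
  - rewrite (rsum_ext _ (fun l => Rpower (INR h) (1+et-q) * Rpower (INR l + 1) (-(1+et)))) by (intros; ring).
    rewrite rsum_scal. rewrite (Rmult_comm (1 + / et)). apply Rmult_le_compat_l. left; apply rpow_pos.
    apply psum_bound; auto.
Qed.

Definition ndist (i j : nat) : nat := ((i - j) + (j - i))%nat.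

Lemma cov_sum q be et r N : 0 < et -> 0 <= be <= q -> 2 * q - be = 1 + et ->
  rsum (fun j => Rpower (INR j + 1) (- q) * Rpower (INR j + INR r + 1) (- q)) N
   <= (1 + / et) * Rpower (INR r + 1) (- be).
Proof.
  intros Het Hb Hq.
  apply Rle_trans with (rsum (fun j => Rpower (INR r + 1) (- be) * Rpower (INR j + 1) (- (1+et))) N).
  - apply rsum_le. intros j _. pose proof (pos_INR j). pose proof (pos_INR r).
    pose proof (maxtrick (INR r + 1) (INR j + 1) (INR j + INR r + 1) be (q - be)) as M.
    replace (- (be + (q - be))) with (-q) in M by ring.
    assert (Hm := M ltac:(lra) ltac:(lra) ltac:(lra) ltac:(lra)).
    replace (- (1+et)) with (-q + - (q - be)) by lra. rewrite Rpower_plus.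
    pose proof (rpow_pos (INR j + 1) (-q)).
    pose proof (rpow_pos (INR r + 1) (-be)).
    pose proof (rpow_pos (INR j + 1) (-(q-be))).
    nra.
  - rewrite rsum_scal, Rmult_comm. apply Rmult_le_compat_r. left; apply rpow_pos. apply psum_bound; auto.
Qed.

Lemma sym_dsum (F : nat -> nat -> R) M :
  (forall i j, F i j = F j i) -> (forall i j, 0 <= F i j) ->
  rsum (fun i => rsum (fun j => F i j) M) M <=
  2 * rsum (fun i => rsum (fun j => if (i <=? j)%nat then F i j else 0) M) M.
Proof.
  intros Hs Hp.
  rewrite (rsum_ext (fun i => rsum (fun j => F i j) M)
    (fun i => rsum (fun j => if (i <=? j)%nat then F i j else 0) M +
              rsum (fun j => if (i <=? j)%nat then 0 else F i j) M)).
  2:{ intros i _. rewrite <- rsum_plus. apply rsum_ext. intros j _. destruct (i <=? j)%nat; ring. }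
  rewrite rsum_plus, (rsum_exch (fun i j => if (i <=? j)%nat then 0 else F i j)).
  assert (rsum (fun j => rsum (fun i => if (i <=? j)%nat then 0 else F i j) M) M
     <= rsum (fun i => rsum (fun j => if (i <=? j)%nat then F i j else 0) M) M).
  { apply rsum_le. intros j _. apply rsum_le. intros i _.
    destruct (i <=? j)%nat eqn:E. destruct (j <=? i)%nat; auto; lra.
    apply Nat.leb_gt in E. replace (j <=? i)%nat with true. rewrite Hs. lra.
    symmetry. apply Nat.leb_le. lia. }
  lra.
Qed.

Lemma tri_shift (G : nat -> R) i M : (i <= M)%nat ->
  rsum (fun j => if (i <=? j)%nat then G j else 0) M = rsum (fun r => G (i + r)%nat) (M - i).
Proof.
  intros H. replace M with (i + (M - i))%nat at 1 by lia. rewrite rsum_split.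
  rewrite rsum_zero. rewrite Rplus_0_l. apply rsum_ext. intros r _.
  replace (i <=? i + r)%nat with true; auto. symmetry; apply Nat.leb_le; lia.
  intros j Hj. replace (i <=? j)%nat with false; auto. symmetry; apply Nat.leb_gt; lia.
Qed.

Lemma dsum_bound kk p be et M : 1 <= kk -> 0 < et -> 0 <= be -> 0 <= 1+et-be <= p ->
  0 <= 2*p - (1+et-be) - 1 - et ->
  rsum (fun i => rsum (fun j => Rpower (kk + INR i + 1) (-p) * Rpower (kk + INR j + 1) (-p)
        * Rpower (INR (ndist i j) + 1) (-be)) M) M
  <= 2 * ((1 + /et) * (1 + /et)) * Rpower kk (-(2*p - (1+et-be) - 1 - et)).
Proof.
  intros Hk Het Hbe Hga Hom. set (ga := 1+et-be) in *. set (om := 2*p - ga - 1 - et) in *.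
  assert (Hc : 0 < 1 + / et) by (pose proof (Rinv_0_lt_compat et Het); lra).
  eapply Rle_trans. apply sym_dsum.
  - intros. unfold ndist. rewrite (Nat.add_comm (i - j)). ring.
  - intros. repeat apply Rmult_le_pos; left; apply rpow_pos.
  - rewrite Rmult_assoc. apply Rmult_le_compat_l. lra.
    apply Rle_trans with (rsum (fun i => (1 + /et) * Rpower (kk + INR i + 1) (-(2*p - ga))) M).
    + apply rsum_le. intros i Hi. rewrite tri_shift by lia.
      apply Rle_trans with (rsum (fun r => Rpower (kk + INR i + 1) (-(2*p-ga)) *
                                   Rpower (INR r + 1) (-(1+et))) (M - i)).
      * apply rsum_le. intros r _. unfold ndist.
        replace ((i - (i + r)) + (i + r - i))%nat with r by lia. rewrite plus_INR.
        pose proof (pos_INR i). pose proof (pos_INR r).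
        pose proof (maxtrick (kk + INR i + 1) (INR r + 1) (kk + (INR i + INR r) + 1) (p - ga) ga) as Mt.
        replace (- (p - ga + ga)) with (-p) in Mt by ring.
        assert (Hm := Mt ltac:(lra) ltac:(lra) ltac:(lra) ltac:(lra)).
        replace (-(2*p-ga)) with (-p + -(p-ga)) by ring.
        replace (-(1+et)) with (-ga + -be) by (unfold ga; ring). rewrite !Rpower_plus.
        pose proof (rpow_pos (kk + INR i + 1) (-p)).
        pose proof (rpow_pos (kk + INR i + 1) (-(p-ga))).
        pose proof (rpow_pos (INR r + 1) (-ga)).
        pose proof (rpow_pos (INR r + 1) (-be)).
        pose proof (rpow_pos (kk + (INR i + INR r) + 1) (-p)).
        set (A1 := Rpower (kk + INR i + 1) (-p)) in *.
        set (A2 := Rpower (kk + INR i + 1) (-(p-ga))) in *.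
        set (B1 := Rpower (INR r + 1) (-ga)) in *.
        set (B2 := Rpower (INR r + 1) (-be)) in *.
        set (Z := Rpower (kk + (INR i + INR r) + 1) (-p)) in *.
        assert (A1 * Z * B2 <= A1 * (A2 * B1) * B2).
        { apply Rmult_le_compat_r. lra. apply Rmult_le_compat_l; lra. }
        lra.
      * rewrite rsum_scal. rewrite Rmult_comm. apply Rmult_le_compat_r. left; apply rpow_pos.
        apply psum_bound; auto.
    + rewrite rsum_scal, Rmult_assoc. apply Rmult_le_compat_l. lra.
      apply Rle_trans with (rsum (fun i => Rpower kk (- om) * Rpower (INR i + 1) (-(1+et))) M).
      * apply rsum_le. intros i _. pose proof (pos_INR i).
        pose proof (maxtrick kk (INR i + 1) (kk + INR i + 1) om (1+et)) as Mt.
        replace (- (om + (1+et))) with (-(2*p-ga)) in Mt by (unfold om; ring).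
        apply Mt; lra.
      * rewrite rsum_scal. rewrite Rmult_comm. apply Rmult_le_compat_r. left; apply rpow_pos.
        apply psum_bound; auto.
Qed.

Arguments vadd_assoc {_} x y z.
Arguments vadd_comm {_} x y.
Arguments vadd_0 {_} x.
Arguments vadd_opp {_} x.
Arguments vscal_1 {_} x.
Arguments vscal_assoc {_} c e x.
Arguments vscal_distr_v {_} c x y.
Arguments vscal_distr_s {_} c e x.
Arguments ip_sym {_} x y.
Arguments ip_add_l {_} x y z.
Arguments ip_scal_l {_} c x z.
Arguments ip_pos {_} x.

Section V.
Context {H : IPSpace}.
Implicit Types x y z : H.
Implicit Types f g : nat -> H.
Implicit Types F : nat -> nat -> H.

Lemma vadd_0l x : vadd vzero x = x.
Proof. rewrite vadd_comm; apply vadd_0. Qed.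

Lemma vadd_cancel x y z : vadd x y = vadd x z -> y = z.
Proof.
  intros E. rewrite <- (vadd_0l y), <- (vadd_0l z), <- (vadd_opp x), (vadd_comm x).
  rewrite <- !vadd_assoc, E. reflexivity.
Qed.

Lemma vscal_0 x : vscal 0 x = vzero.
Proof.
  apply (vadd_cancel (vscal 0 x)). rewrite vadd_0, <- vscal_distr_s. f_equal; ring.
Qed.

Lemma vopp_scal x : vopp x = vscal (-1) x.
Proof.
  apply (vadd_cancel x). rewrite vadd_opp. rewrite <- (vscal_1 x) at 1.
  rewrite <- vscal_distr_s. replace (1 + -1) with 0 by ring. symmetry; apply vscal_0.
Qed.

Lemma vscal_zero c : vscal c (@vzero H) = vzero.
Proof. rewrite <- (vscal_0 vzero), vscal_assoc. f_equal; ring. Qed.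

Lemma ip_zero_l z : ip (@vzero H) z = 0.
Proof. rewrite <- (vscal_0 vzero), ip_scal_l. ring. Qed.

Lemma ip_zero_r z : ip z (@vzero H) = 0.
Proof. rewrite ip_sym; apply ip_zero_l. Qed.

Lemma ip_opp_l x z : ip (vopp x) z = - ip x z.
Proof. rewrite vopp_scal, ip_scal_l. ring. Qed.

Lemma ip_add_r x y z : ip z (vadd x y) = ip z x + ip z y.
Proof. rewrite !(ip_sym z), ip_add_l; auto. Qed.

Lemma ip_scal_r c x z : ip z (vscal c x) = c * ip z x.
Proof. rewrite !(ip_sym z), ip_scal_l; auto. Qed.

Lemma ip_opp_r x z : ip z (vopp x) = - ip z x.
Proof. rewrite !(ip_sym z), ip_opp_l; auto. Qed.

Lemma ip_sub_l x y z : ip (vsub x y) z = ip x z - ip y z.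
Proof. unfold vsub. rewrite ip_add_l, ip_opp_l. ring. Qed.

Lemma ip_sub_r x y z : ip z (vsub x y) = ip z x - ip z y.
Proof. unfold vsub. rewrite ip_add_r, ip_opp_r. ring. Qed.

Lemma ip_vsumn_l f n z : ip (vsumn f n) z = rsum (fun i => ip (f i) z) n.
Proof. induction n; simpl. apply ip_zero_l. rewrite ip_add_l, IHn; auto. Qed.

Lemma ip_vsumn_r f n z : ip z (vsumn f n) = rsum (fun i => ip z (f i)) n.
Proof. rewrite ip_sym, ip_vsumn_l. apply rsum_ext. intros; apply ip_sym. Qed.

Lemma vadd_swap4 (a b c d : H) : vadd (vadd a b) (vadd c d) = vadd (vadd a c) (vadd b d).
Proof. rewrite <- !vadd_assoc. f_equal. rewrite !vadd_assoc. f_equal. apply vadd_comm. Qed.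

Lemma vopp_add x y : vopp (vadd x y) = vadd (vopp x) (vopp y).
Proof. rewrite !vopp_scal. apply vscal_distr_v. Qed.

Lemma vopp_opp x : vopp (vopp x) = x.
Proof. rewrite !vopp_scal, vscal_assoc. replace (-1 * -1) with 1 by ring. apply vscal_1. Qed.

Lemma vopp_zero : vopp (@vzero H) = vzero.
Proof. rewrite vopp_scal; apply vscal_zero. Qed.

Lemma vsumn_ext f g n : (forall i, (i < n)%nat -> f i = g i) -> vsumn f n = vsumn g n.
Proof. induction n; simpl; intros E; auto. rewrite IHn, E; auto. Qed.

Lemma vsumn_add f g n : vsumn (fun i => vadd (f i) (g i)) n = vadd (vsumn f n) (vsumn g n).
Proof. induction n; simpl. rewrite vadd_0; auto. rewrite IHn. apply vadd_swap4. Qed.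

Lemma vsumn_scal c f n : vsumn (fun i => vscal c (f i)) n = vscal c (vsumn f n).
Proof. induction n; simpl. rewrite vscal_zero; auto. rewrite IHn, vscal_distr_v; auto. Qed.

Lemma vsumn_opp f n : vsumn (fun i => vopp (f i)) n = vopp (vsumn f n).
Proof. rewrite vopp_scal, <- vsumn_scal. apply vsumn_ext; intros; apply vopp_scal. Qed.

Lemma vsumn_zero f n : (forall i, (i < n)%nat -> f i = vzero) -> vsumn f n = vzero.
Proof. induction n; simpl; intros E; auto. rewrite IHn, E, vadd_0; auto. Qed.

Lemma vsumn_split f n m : vsumn f (n + m) = vadd (vsumn f n) (vsumn (fun i => f (n + i)%nat) m).
Proof. induction m; simpl. rewrite Nat.add_0_r, vadd_0; auto.
  rewrite Nat.add_succ_r; simpl. rewrite IHm, vadd_assoc; auto. Qed.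

Lemma vsumn_exch F n m :
  vsumn (fun i => vsumn (fun j => F i j) m) n = vsumn (fun j => vsumn (fun i => F i j) n) m.
Proof. induction n; simpl. rewrite vsumn_zero; auto. rewrite IHn, <- vsumn_add. reflexivity. Qed.

Lemma vsumn_scal_l (f : nat -> R) x n : vsumn (fun i => vscal (f i) x) n = vscal (rsum f n) x.
Proof. induction n; simpl. rewrite vscal_0; auto. rewrite IHn, vscal_distr_s; auto. Qed.

Lemma vsumn_S_l f n : vsumn f (S n) = vadd (f 0%nat) (vsumn (fun i => f (S i)) n).
Proof. change (S n) with (1 + n)%nat. rewrite vsumn_split. simpl. rewrite vadd_0l. auto. Qed.

Lemma msq_add x y : msq (vadd x y) = msq x + msq y + 2 * ip x y.
Proof. unfold msq. rewrite ip_add_l, !ip_add_r, (ip_sym y x). ring. Qed.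

Lemma msq_scal c x : msq (vscal c x) = c * c * msq x.
Proof. unfold msq. rewrite ip_scal_l, ip_scal_r. ring. Qed.

Lemma msq_pos x : 0 <= msq x.
Proof. apply ip_pos. Qed.

Lemma CS x y : (ip x y) * (ip x y) <= msq x * msq y.
Proof.
  destruct (Req_dec (msq y) 0) as [E|E].
  - assert (forall t, 0 <= msq x - 2 * t * ip x y).
    { intros t. pose proof (msq_pos (vadd x (vscal (-t) y))) as P.
      rewrite msq_add, msq_scal, E, ip_scal_r in P. lra. }
    rewrite E. destruct (Req_dec (ip x y) 0) as [E2|E2]. rewrite E2; lra.
    pose proof (H0 ((msq x + 1) / ip x y)). pose proof (msq_pos x).
    replace (2 * ((msq x + 1) / ip x y) * ip x y) with (2 * (msq x + 1)) in H1 by (field; auto).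
    lra.
  - pose proof (msq_pos y).
    set (t := ip x y / msq y).
    pose proof (msq_pos (vadd x (vscal (-t) y))) as P.
    rewrite msq_add, msq_scal, ip_scal_r in P.
    assert (0 < msq y) by lra.
    unfold t in P. apply (Rmult_le_compat_r (msq y)) in P; [|lra].
    field_simplify in P; [|lra]. nra.
Qed.

Definition nrm x := sqrt (msq x).

Lemma nrm_pos x : 0 <= nrm x.
Proof. apply sqrt_pos. Qed.

Lemma nrm_sq x : nrm x * nrm x = msq x.
Proof. apply sqrt_sqrt, msq_pos. Qed.

Lemma ip_le_nrm x y : Rabs (ip x y) <= nrm x * nrm y.
Proof.
  unfold nrm. rewrite <- sqrt_mult by apply msq_pos.
  rewrite <- sqrt_Rsqr_abs. apply sqrt_le_1_alt. unfold Rsqr. apply CS.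
Qed.

Lemma nrm_add x y : nrm (vadd x y) <= nrm x + nrm y.
Proof.
  pose proof (nrm_pos x). pose proof (nrm_pos y). pose proof (nrm_pos (vadd x y)).
  apply Rsqr_incr_0_var; [|lra]. unfold Rsqr. rewrite nrm_sq, msq_add, <- nrm_sq, <- (nrm_sq y).
  pose proof (ip_le_nrm x y). pose proof (Rle_abs (ip x y)). nra.
Qed.

Lemma nrm_scal c x : nrm (vscal c x) = Rabs c * nrm x.
Proof. unfold nrm. rewrite msq_scal, sqrt_mult_alt.
  replace (c * c) with (Rsqr c) by reflexivity. rewrite sqrt_Rsqr_abs; auto.
  apply Rle_0_sqr. Qed.

Lemma nrm_vsumn f n : nrm (vsumn f n) <= rsum (fun i => nrm (f i)) n.
Proof. induction n; simpl. unfold nrm, msq. rewrite ip_zero_l, sqrt_0; lra.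
  eapply Rle_trans. apply nrm_add. lra. Qed.

Lemma msq_le_of_nrm x b : 0 <= b -> nrm x <= b -> msq x <= b * b.
Proof. intros. rewrite <- nrm_sq. pose proof (nrm_pos x). nra. Qed.
End V.

Section G.
Context {H : IPSpace}.
Implicit Types x y z : H.

Lemma vsub_of_add x y z : vadd x y = z -> x = vsub z y.
Proof. intros <-. unfold vsub. rewrite <- vadd_assoc, vadd_opp, vadd_0. auto. Qed.

Lemma G1 (A A' B X : H) :
  vadd (vsub (vsub (vopp A) B) X) (vsub A A') = vopp (vadd (vadd X A') B).
Proof.
  unfold vsub. rewrite !vopp_add.
  rewrite (vadd_comm (vopp A) (vopp B)).
  rewrite <- (vadd_assoc (vopp B) (vopp A) (vopp X)).
  rewrite (vadd_comm (vopp A) (vopp X)).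
  rewrite <- !vadd_assoc. rewrite (vadd_assoc (vopp A) A (vopp A')).
  rewrite (vadd_comm (vopp A) A), vadd_opp, vadd_0l.
  rewrite vadd_comm, <- vadd_assoc. auto.
Qed.

Lemma G2 (e A Q : H) : vadd e (vopp A) = vadd (vsub e (vadd A Q)) Q.
Proof.
  unfold vsub. rewrite vopp_add, <- !vadd_assoc. f_equal.
  rewrite (vadd_comm (vopp Q)), vadd_opp, vadd_0. auto.
Qed.

End G.

Section Pred.
Context {H : IPSpace} (a b : nat -> R) (X : Z -> H) (k : nat).

Lemma predF_stable m h : (1 <= h <= m)%nat -> predF a X k m h = predictor a X k h.
Proof.
  induction m; intros Hh. lia.
  simpl. destruct (h <=? m)%nat eqn:E.
  - apply Nat.leb_le in E. apply IHm. lia.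
  - apply Nat.leb_gt in E. assert (h = S m) by lia. subst h.
    unfold predictor. change (predF a X k (S m) (S m)) with (if (S m <=? m)%nat then predF a X k m (S m) else pred_step a X k (S m) (predF a X k m)).
    replace (S m <=? m)%nat with false by (symmetry; apply Nat.leb_gt; lia). reflexivity.
Qed.

Lemma predictor_rec h : (1 <= h)%nat ->
  predictor a X k h =
  vsub (vopp (vsumn (fun i => vscal (a (S i)) (predictor a X k (h - S i)%nat)) (h - 1)))
       (vsumn (fun i => vscal (a (h + i)%nat) (X (Z.of_nat k - Z.of_nat i)%Z)) k).
Proof.
  intros Hh. destruct h as [|m]. lia.
  unfold predictor at 1. change (predF a X k (S m) (S m)) with (if (S m <=? m)%nat then predF a X k m (S m) else pred_step a X k (S m) (predF a X k m)).
  replace (S m <=? m)%nat with false by (symmetry; apply Nat.leb_gt; lia). unfold pred_step.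
  f_equal. f_equal. apply vsumn_ext. intros i Hi. f_equal.
  apply predF_stable. lia.
Qed.

Definition Dv h := vsub (predictor a X k h) (X (Z.of_nat (k + h))).
Definition Vv m := vopp (vsumn (fun j => vscal (a j) (X (Z.of_nat (k + m) - Z.of_nat j)%Z)) (m + k)).

Hypothesis Ha0 : a 0%nat = 1.

Lemma Dv_rec h : (1 <= h)%nat ->
  Dv h = vsub (Vv h) (vsumn (fun i => vscal (a (S i)) (Dv (h - S i)%nat)) (h - 1)).
Proof.
  intros Hh. apply vsub_of_add.
  set (A := vsumn (fun i => vscal (a (S i)) (predictor a X k (h - S i)%nat)) (h - 1)).
  set (A' := vsumn (fun i => vscal (a (S i)) (X (Z.of_nat (k + (h - S i))))) (h - 1)).
  set (B := vsumn (fun i => vscal (a (h + i)%nat) (X (Z.of_nat k - Z.of_nat i)%Z)) k).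
  assert (E1 : vsumn (fun i => vscal (a (S i)) (Dv (h - S i)%nat)) (h - 1) = vsub A A').
  { unfold A, A', vsub, Dv. rewrite <- vsumn_opp, <- vsumn_add. apply vsumn_ext. intros i _.
    unfold vsub. rewrite vscal_distr_v, !vopp_scal, vscal_assoc, vscal_assoc. f_equal. f_equal. ring. }
  assert (E2 : Vv h = vopp (vadd (vadd (X (Z.of_nat (k + h))) A') B)).
  { unfold Vv. f_equal. replace (h + k)%nat with (1 + (h - 1) + k)%nat by lia.
    rewrite !vsumn_split. f_equal; [f_equal|].
    - cbn [vsumn]. rewrite vadd_0l, Ha0, vscal_1. f_equal. lia.
    - unfold A'. apply vsumn_ext. intros i Hi. f_equal. f_equal. lia.
    - unfold B. apply vsumn_ext. intros i _. f_equal; f_equal; lia. }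
  rewrite E1, E2. unfold Dv. rewrite predictor_rec by auto. fold A B. apply G1.
Qed.

Lemma vsumn_S (f : nat -> H) n : vsumn f (S n) = vadd (vsumn f n) (f n).
Proof. reflexivity. Qed.

Lemma conv_vec (U : nat -> H) n :
  vsumn (fun j => vscal (a j) (vsumn (fun l => vscal (b l) (U (j + l)%nat)) (n - j))) n
  = vsumn (fun m => vscal (rsum (fun j => a j * b (m - j)%nat) (S m)) (U m)) n.
Proof.
  induction n. reflexivity.
  rewrite !vsumn_S. rewrite <- IHn.
  rewrite (vsumn_ext _ (fun j => vadd (vscal (a j) (vsumn (fun l => vscal (b l) (U (j + l)%nat)) (n - j)))
                                      (vscal (a j * b (n - j)%nat) (U n)))).
  2:{ intros j Hj. replace (S n - j)%nat with (S (n - j)) by lia. rewrite vsumn_S, vscal_distr_v.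
      f_equal. rewrite vscal_assoc. f_equal. f_equal. lia. }
  rewrite vsumn_add, vsumn_scal_l. replace (S n - n)%nat with 1%nat by lia.
  cbn [vsumn rsum]. rewrite vadd_0l, vscal_assoc, Nat.sub_diag, Nat.add_0_r.
  rewrite <- vadd_assoc, <- vscal_distr_s. reflexivity.
Qed.

Hypothesis HAB : forall n, sum_f_R0 (fun i => a i * b (n - i)%nat) n = if (n =? 0)%nat then 1 else 0.

Definition Wv h := vsumn (fun l => vscal (b l) (Vv (h - l)%nat)) h.

Lemma Wv_rec h : (1 <= h)%nat ->
  Wv h = vsub (Vv h) (vsumn (fun i => vscal (a (S i)) (Wv (h - S i)%nat)) (h - 1)).
Proof.
  intros Hh. apply vsub_of_add.
  pose proof (conv_vec (fun m => Vv (h - m)%nat) h) as C.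
  rewrite (vsumn_ext (fun m => vscal (rsum (fun j => a j * b (m - j)%nat) (S m)) (Vv (h - m)%nat))
      (fun m => vscal (if (m =? 0)%nat then 1 else 0) (Vv (h - m)%nat))) in C.
  2:{ intros m _. rewrite rsum_sum_f, HAB. reflexivity. }
  destruct h as [|h']. lia.
  rewrite !vsumn_S_l in C. cbn [Nat.eqb] in C.
  rewrite vscal_1, (vsumn_zero (fun i => vscal 0 (Vv (S h' - S i))) h'), vadd_0, !Nat.sub_0_r in C.
  2:{ intros i _. apply vscal_0. }
  replace (S h' - 1)%nat with h' by lia.
  rewrite <- C. rewrite Ha0, vscal_1. unfold Wv. f_equal.
  - apply vsumn_ext. intros i Hi. f_equal.
    apply vsumn_ext. intros l _. f_equal. f_equal. lia.
Qed.

Lemma Dv_eq_Wv h : (1 <= h)%nat -> Dv h = Wv h.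
Proof.
  assert (forall n h, (1 <= h <= n)%nat -> Dv h = Wv h).
  { induction n; intros h0 Hh0. lia.
    rewrite Dv_rec, Wv_rec by lia. f_equal. apply vsumn_ext. intros i Hi. f_equal.
    apply IHn. lia. }
  intros. apply (H0 h). lia.
Qed.
End Pred.

Lemma small_zero x : (forall e, 0 < e -> Rabs x <= e) -> x = 0.
Proof.
  intros Hx. destruct (Req_dec x 0) as [E|E]; auto.
  pose proof (Hx (Rabs x / 2)). assert (0 < Rabs x) by (apply Rabs_pos_lt; auto).
  lra.
Qed.

Lemma le_of_forall x y K : 0 <= K -> (forall t, 0 < t -> x <= y + t * K) -> x <= y.
Proof.
  intros HK Hx. destruct (Rle_dec x y) as [E|E]; auto.
  pose proof (Hx ((x - y) / (2 * (K + 1)))).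
  assert (0 < (x - y) / (2 * (K + 1))) by (apply Rdiv_lt_0_compat; lra).
  specialize (H H0).
  assert ((x - y) / (2 * (K + 1)) * K <= (x - y) / 2).
  { unfold Rdiv. rewrite Rinv_mult. 
    assert (0 < / (K + 1)) by (apply Rinv_0_lt_compat; lra).
    assert (/ (K+1) * K <= 1).
    { apply (Rmult_le_reg_l (K+1)). lra. rewrite <- Rmult_assoc, Rinv_r by lra. lra. }
    assert (0 < (x - y) * / 2) by lra. nra. }
  lra.
Qed.

Section F.
Context {H : IPSpace}.

Lemma cv_nrm (x : H) (P : nat -> H) : Un_cv (fun N => msq (vsub x (P N))) 0 ->
  forall t, 0 < t -> exists N0, forall N, (N >= N0)%nat -> nrm (vsub x (P N)) < t.
Proof.
  intros Hc t Ht. destruct (Hc (t * t)) as [N0 HN0]. nra.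
  exists N0. intros N HN. specialize (HN0 N HN). unfold R_dist in HN0.
  rewrite Rminus_0_r, Rabs_right in HN0 by (apply Rle_ge, msq_pos).
  unfold nrm. rewrite <- (sqrt_square t) by lra. apply sqrt_lt_1_alt. split; auto. apply msq_pos.
Qed.

Lemma ip_limit_zero (y x : H) (P : nat -> H) :
  Un_cv (fun N => msq (vsub x (P N))) 0 -> (forall N, ip y (P N) = 0) -> ip y x = 0.
Proof.
  intros Hc HP. apply small_zero. intros e He.
  set (c := nrm y + 1). assert (Hcp : 0 < c) by (unfold c; pose proof (nrm_pos y); lra).
  destruct (cv_nrm x P Hc (e / c)) as [N0 HN0]. apply Rdiv_lt_0_compat; auto.
  specialize (HN0 N0 (le_n _)).
  replace (ip y x) with (ip y (vsub x (P N0))) by (rewrite ip_sub_r, HP; ring).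
  eapply Rle_trans. apply ip_le_nrm.
  pose proof (nrm_pos y). pose proof (nrm_pos (vsub x (P N0))).
  apply Rle_trans with (nrm y * (e / c)). apply Rmult_le_compat_l; lra.
  unfold c. unfold Rdiv. apply (Rmult_le_reg_r (nrm y + 1)). lra.
  rewrite Rmult_assoc, Rmult_assoc, Rinv_l by lra. nra.
Qed.

Lemma fin_unif (P : nat -> nat -> Prop) h :
  (forall l N N', (N <= N')%nat -> P l N -> P l N') ->
  (forall l, (l < h)%nat -> exists N0, P l N0) ->
  exists N0, forall l N, (l < h)%nat -> (N >= N0)%nat -> P l N.
Proof.
  intros Hm Hl. induction h.
  - exists 0%nat. intros; lia.
  - destruct IHh as [N1 HN1]. intros; apply Hl; lia.
    destruct (Hl h) as [N2 HN2]. lia.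
    exists (Nat.max N1 N2). intros l N Hlh HN.
    destruct (Nat.eq_dec l h). subst. apply (Hm h N2); auto. lia.
    apply HN1; lia.
Qed.

Variables (X eps : Z -> H) (a b : nat -> R) (s2 : R).
Hypothesis Heps_unc : forall n m, n <> m -> ip (eps n) (eps m) = 0.
Hypothesis Heps_var : forall n, msq (eps n) = s2.
Hypothesis Hs2 : 0 < s2.
Hypothesis HXma : forall n, Un_cv (fun N =>
      msq (vsub (X n) (vsumn (fun j => vscal (b j) (eps (n - Z.of_nat j)%Z)) (S N)))) 0.
Hypothesis HepsAR : forall n, Un_cv (fun N =>
      msq (vsub (eps n) (vsumn (fun j => vscal (a j) (X (n - Z.of_nat j)%Z)) (S N)))) 0.

Lemma orth_eps_X s t : (t < s)%Z -> ip (eps s) (X t) = 0.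
Proof.
  intros Hts. apply (ip_limit_zero _ _ _ (HXma t)). intros N.
  rewrite ip_vsumn_r. apply rsum_zero. intros j _. rewrite ip_scal_r, Heps_unc. ring. lia.
Qed.

Definition rho (n : Z) (L : nat) : H :=
  vadd (eps n) (vopp (vsumn (fun j => vscal (a j) (X (n - Z.of_nat j)%Z)) L)).

Lemma rho_split n L N : (L <= S N)%nat ->
  rho n L = vadd (vsub (eps n) (vsumn (fun j => vscal (a j) (X (n - Z.of_nat j)%Z)) (S N)))
                 (vsumn (fun i => vscal (a (L + i)%nat) (X (n - Z.of_nat (L + i))%Z)) (S N - L)).
Proof.
  intros HL. unfold rho. replace (S N) with (L + (S N - L))%nat at 1 by lia.
  rewrite vsumn_split. apply G2.
Qed.

Lemma orth_rho s n L : (n - Z.of_nat L < s)%Z -> ip (eps s) (rho n L) = 0.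
Proof.
  intros Hs. apply small_zero. intros e He.
  set (c := sqrt s2 + 1). assert (Hc : 0 < c) by (unfold c; pose proof (sqrt_pos s2); lra).
  destruct (cv_nrm _ _ (HepsAR n) (e / c)) as [N0 HN0]. apply Rdiv_lt_0_compat; auto.
  set (N := Nat.max N0 L). specialize (HN0 N ltac:(unfold N; lia)).
  rewrite (rho_split n L N) by (unfold N; lia).
  rewrite ip_add_r, ip_vsumn_r, rsum_zero.
  2:{ intros i _. rewrite ip_scal_r, orth_eps_X. ring. lia. }
  rewrite Rplus_0_r. eapply Rle_trans. apply ip_le_nrm.
  assert (E1 : nrm (eps s) = sqrt s2) by (unfold nrm; rewrite Heps_var; auto).
  rewrite E1. pose proof (sqrt_pos s2). pose proof (nrm_pos (vsub (eps n)
     (vsumn (fun j : nat => vscal (a j) (X (n - Z.of_nat j)%Z)) (S N)))).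
  apply Rle_trans with (sqrt s2 * (e / c)). apply Rmult_le_compat_l; lra.
  unfold c, Rdiv. apply (Rmult_le_reg_r (sqrt s2 + 1)). lra.
  rewrite Rmult_assoc, Rmult_assoc, Rinv_l by lra. nra.
Qed.

Lemma msq_E t n : msq (vsumn (fun l => vscal (b l) (eps (t - Z.of_nat l)%Z)) n)
  = s2 * rsum (fun l => b l ^ 2) n.
Proof.
  induction n. simpl. unfold msq. rewrite ip_zero_l. ring.
  cbn [vsumn rsum]. rewrite msq_add, IHn, msq_scal, Heps_var.
  rewrite ip_vsumn_l.
  rewrite (rsum_zero (fun i => ip (vscal (b i) (eps (t - Z.of_nat i)%Z))
       (vscal (b n) (eps (t - Z.of_nat n)%Z)))). ring.
  intros i Hi. rewrite ip_scal_l, ip_scal_r, Heps_unc. ring. lia.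
Qed.
End F.

Lemma delta_sum (f g : nat -> R) j0 M : (forall j, j <> j0 -> g j = 0) ->
  rsum (fun j => f j * g j) M = if (j0 <? M)%nat then f j0 * g j0 else 0.
Proof.
  intros Hg. induction M. reflexivity.
  cbn [rsum]. rewrite IHM. destruct (Nat.eq_dec M j0).
  - subst. replace (j0 <? j0)%nat with false by (symmetry; apply Nat.ltb_ge; lia).
    replace (j0 <? S j0)%nat with true by (symmetry; apply Nat.ltb_lt; lia). ring.
  - rewrite (Hg M) by auto. destruct (j0 <? M)%nat eqn:E1.
    + apply Nat.ltb_lt in E1. replace (j0 <? S M)%nat with true by (symmetry; apply Nat.ltb_lt; lia). ring.
    + apply Nat.ltb_ge in E1. replace (j0 <? S M)%nat with false by (symmetry; apply Nat.ltb_ge; lia). ring.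
Qed.

Section Gs.
Context {H : IPSpace}.

Lemma vsub_vsub (x y : H) : vsub x (vsub x y) = y.
Proof. unfold vsub. rewrite vopp_add, vopp_opp, vadd_assoc, vadd_opp, vadd_0l. auto. Qed.

Lemma nrm_opp (x : H) : nrm (vopp x) = nrm x.
Proof. rewrite vopp_scal, nrm_scal. replace (Rabs (-1)) with 1. ring. rewrite Rabs_left; lra. Qed.

Lemma nrm_sub (x y : H) : nrm (vsub x y) <= nrm x + nrm y.
Proof. unfold vsub. rewrite <- (nrm_opp y). apply nrm_add. Qed.

Variables (X eps : Z -> H) (a b : nat -> R) (s2 : R).
Hypothesis Heps_unc : forall n m, n <> m -> ip (eps n) (eps m) = 0.
Hypothesis Heps_var : forall n, msq (eps n) = s2.
Hypothesis Hs2 : 0 < s2.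
Hypothesis HXma : forall n, Un_cv (fun N =>
      msq (vsub (X n) (vsumn (fun j => vscal (b j) (eps (n - Z.of_nat j)%Z)) (S N)))) 0.
Variables (B1 q be et : R).
Hypothesis Hb1 : forall j, Rabs (b j) <= B1 * Rpower (INR j + 1) (- q).
Hypothesis Het : 0 < et.
Hypothesis Hbe : 0 <= be <= q.
Hypothesis Hq : 2 * q - be = 1 + et.

Definition CB := s2 * (B1 * B1) * (1 + / et).

Lemma cov_partial n r N :
  Rabs (ip (vsumn (fun j => vscal (b j) (eps (n - Z.of_nat j)%Z)) N)
           (vsumn (fun j => vscal (b j) (eps (n + Z.of_nat r - Z.of_nat j)%Z)) N))
  <= CB * Rpower (INR r + 1) (- be).
Proof.
  rewrite ip_vsumn_l.
  eapply Rle_trans. apply rsum_abs.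
  apply Rle_trans with (rsum (fun j => s2 * (B1 * B1) * (Rpower (INR j + 1) (- q) *
                           Rpower (INR j + INR r + 1) (- q))) N).
  - apply rsum_le. intros j _. rewrite ip_scal_l, ip_vsumn_r.
    rewrite (rsum_ext _ (fun j' => b j' * ip (eps (n - Z.of_nat j)%Z) (eps (n + Z.of_nat r - Z.of_nat j')%Z)))
      by (intros; rewrite ip_scal_r; ring).
    rewrite (delta_sum _ _ (j + r)%nat).
    2:{ intros j' Hj'. apply Heps_unc. lia. }
    rewrite Rabs_mult. pose proof (Hb1 j). pose proof (Hb1 (j + r)%nat).
    rewrite plus_INR in H1.
    pose proof (Rabs_pos (b j)). pose proof (rpow_pos (INR j + 1) (-q)).
    pose proof (rpow_pos (INR j + INR r + 1) (-q)).
    assert (HB1 : 0 <= B1).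
    { pose proof (Rabs_pos (b 0%nat)). pose proof (Hb1 0%nat). pose proof (rpow_pos (INR 0 + 1) (-q)).
      destruct (Rle_dec 0 B1); auto. nra. }
    destruct (j + r <? N)%nat.
    + replace (n + Z.of_nat r - Z.of_nat (j + r))%Z with (n - Z.of_nat j)%Z by lia.
      fold (msq (eps (n - Z.of_nat j)%Z)). rewrite Heps_var, Rabs_mult, (Rabs_right s2) by lra.
      assert (Rabs (b (j + r)%nat) * s2 <= B1 * Rpower (INR j + INR r + 1) (- q) * s2)
        by (apply Rmult_le_compat_r; lra).
      pose proof (Rabs_pos (b (j + r)%nat)).
      apply Rle_trans with (B1 * Rpower (INR j + 1) (- q) * (B1 * Rpower (INR j + INR r + 1) (- q) * s2)).
      apply Rmult_le_compat; auto; try lra. apply Rmult_le_pos; lra.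
      right; ring.
    + rewrite Rabs_R0, Rmult_0_r. repeat apply Rmult_le_pos; lra.
  - rewrite rsum_scal. unfold CB. rewrite (Rmult_assoc (s2 * (B1 * B1)) (1 + / et)).
    apply Rmult_le_compat_l.
    assert (HB1 : 0 <= B1 * B1) by nra. nra.
    apply cov_sum; auto.
Qed.

Lemma cov_bound n r : Rabs (ip (X n) (X (n + Z.of_nat r)%Z)) <= CB * Rpower (INR r + 1) (- be).
Proof.
  set (m := (n + Z.of_nat r)%Z).
  set (P := fun N => vsumn (fun j => vscal (b j) (eps (n - Z.of_nat j)%Z)) (S N)).
  set (Q := fun N => vsumn (fun j => vscal (b j) (eps (m - Z.of_nat j)%Z)) (S N)).
  apply (le_of_forall _ _ (nrm (X n) + nrm (X m) + 1)).
  { pose proof (nrm_pos (X n)); pose proof (nrm_pos (X m)); lra. }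
  intros t Ht. set (t' := Rmin t 1).
  assert (Ht' : 0 < t' <= t /\ t' <= 1) by (unfold t'; unfold Rmin; destruct (Rle_dec t 1); lra).
  destruct (cv_nrm _ P (HXma n) t') as [N1 HN1]. lra.
  destruct (cv_nrm _ Q (HXma m) t') as [N2 HN2]. lra.
  set (N := Nat.max N1 N2). specialize (HN1 N ltac:(unfold N; lia)). specialize (HN2 N ltac:(unfold N; lia)).
  assert (E : ip (X n) (X m) = ip (vsub (X n) (P N)) (X m) + (ip (P N) (vsub (X m) (Q N)) + ip (P N) (Q N)))
    by (rewrite ip_sub_l, ip_sub_r; ring).
  rewrite E.
  assert (C1 : Rabs (ip (P N) (Q N)) <= CB * Rpower (INR r + 1) (- be)).
  { unfold P, Q, m. apply cov_partial. }
  assert (NP : nrm (P N) <= nrm (X n) + t').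
  { rewrite <- (vsub_vsub (X n) (P N)). eapply Rle_trans. apply nrm_sub. lra. }
  pose proof (ip_le_nrm (vsub (X n) (P N)) (X m)).
  pose proof (ip_le_nrm (P N) (vsub (X m) (Q N))).
  pose proof (nrm_pos (X n)). pose proof (nrm_pos (X m)). pose proof (nrm_pos (P N)).
  pose proof (nrm_pos (vsub (X n) (P N))). pose proof (nrm_pos (vsub (X m) (Q N))).
  eapply Rle_trans. apply Rabs_triang. eapply Rle_trans. apply Rplus_le_compat_l. apply Rabs_triang.
  assert (nrm (vsub (X n) (P N)) * nrm (X m) <= t' * nrm (X m)) by (apply Rmult_le_compat_r; lra).
  assert (nrm (P N) * nrm (vsub (X m) (Q N)) <= (nrm (X n) + t') * t') by (apply Rmult_le_compat; lra).
  assert (t' * nrm (X m) + (nrm (X n) + t') * t' <= t * (nrm (X n) + nrm (X m) + 1)) by nra.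
  lra.
Qed.
End Gs.

Section Hs.
Context {H : IPSpace}.

Lemma pad (f : nat -> R) (Y : nat -> H) L M : (L <= M)%nat ->
  vsumn (fun i => vscal (f i) (Y i)) L =
  vsumn (fun i => vscal (if (i <? L)%nat then f i else 0) (Y i)) M.
Proof.
  intros HL. replace M with (L + (M - L))%nat by lia. rewrite vsumn_split.
  rewrite (vsumn_zero (fun i => vscal (if (L + i <? L)%nat then f (L + i)%nat else 0) (Y (L + i)%nat))).
  rewrite vadd_0. apply vsumn_ext. intros i Hi.
  replace (i <? L)%nat with true by (symmetry; apply Nat.ltb_lt; lia). auto.
  intros i _. replace (L + i <? L)%nat with false by (symmetry; apply Nat.ltb_ge; lia). apply vscal_0.
Qed.

Lemma msq_lin (c : nat -> R) (Y : nat -> H) M :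
  msq (vsumn (fun i => vscal (c i) (Y i)) M) =
  rsum (fun i => rsum (fun j => c i * c j * ip (Y i) (Y j)) M) M.
Proof.
  unfold msq. rewrite ip_vsumn_l. apply rsum_ext. intros i _.
  rewrite ip_vsumn_r. apply rsum_ext. intros j _. rewrite ip_scal_l, ip_scal_r. ring.
Qed.

Lemma msq_lin_bound (c F : nat -> R) (G : nat -> nat -> R) (Y : nat -> H) M :
  (forall i, Rabs (c i) <= F i) -> (forall i j, Rabs (ip (Y i) (Y j)) <= G i j) ->
  msq (vsumn (fun i => vscal (c i) (Y i)) M) <=
  rsum (fun i => rsum (fun j => F i * F j * G i j) M) M.
Proof.
  intros Hc HG. rewrite msq_lin.
  eapply Rle_trans. apply Rle_abs. eapply Rle_trans. apply rsum_abs.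
  apply rsum_le. intros i _. eapply Rle_trans. apply rsum_abs.
  apply rsum_le. intros j _. rewrite !Rabs_mult.
  pose proof (Hc i). pose proof (Hc j). pose proof (HG i j).
  pose proof (Rabs_pos (c i)). pose proof (Rabs_pos (c j)). pose proof (Rabs_pos (ip (Y i) (Y j))).
  apply Rmult_le_compat; try apply Rmult_le_pos; auto.
  apply Rmult_le_compat; auto.
Qed.

Lemma double_to_single (bb : nat -> R) (w : nat -> nat -> R) (Ln : nat -> nat) (Y : nat -> H) h M :
  (forall l, (Ln l <= M)%nat) ->
  vsumn (fun l => vscal (bb l) (vsumn (fun i => vscal (w l i) (Y i)) (Ln l))) h =
  vsumn (fun i => vscal (rsum (fun l => bb l * (if (i <? Ln l)%nat then w l i else 0)) h) (Y i)) M.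
Proof.
  intros HL.
  rewrite (vsumn_ext _ (fun l => vsumn (fun i => vscal (bb l * (if (i <? Ln l)%nat then w l i else 0)) (Y i)) M)).
  2:{ intros l _. rewrite (pad (w l) Y (Ln l) M) by auto. rewrite <- vsumn_scal.
      apply vsumn_ext. intros i _. rewrite vscal_assoc. auto. }
  rewrite vsumn_exch. apply vsumn_ext. intros i _. apply vsumn_scal_l.
Qed.
End Hs.

Section Main.
Context {H : IPSpace}.
Variables (X eps : Z -> H) (a b : nat -> R) (s2 : R).
Hypothesis Heps_unc : forall n m, n <> m -> ip (eps n) (eps m) = 0.
Hypothesis Heps_var : forall n, msq (eps n) = s2.
Hypothesis Hs2 : 0 < s2.
Hypothesis HXma : forall n, Un_cv (fun N =>
      msq (vsub (X n) (vsumn (fun j => vscal (b j) (eps (n - Z.of_nat j)%Z)) (S N)))) 0.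
Hypothesis HepsAR : forall n, Un_cv (fun N =>
      msq (vsub (eps n) (vsumn (fun j => vscal (a j) (X (n - Z.of_nat j)%Z)) (S N)))) 0.
Hypothesis Ha0 : a 0%nat = 1.
Hypothesis HAB : forall n, sum_f_R0 (fun i => a i * b (n - i)%nat) n = if (n =? 0)%nat then 1 else 0.

Definition Tv k h := vsumn (fun l => vscal (b l) (rho X eps a (Z.of_nat (k + (h - l))) (h - l + k))) h.

Lemma core k h : (1 <= k)%nat -> (1 <= h)%nat ->
  msq (vsub (predictor a X k h) (X (Z.of_nat (k + h)))) = s2 * rsum (fun l => b l ^ 2) h + msq (Tv k h).
Proof.
  intros Hk Hh.
  change (vsub (predictor a X k h) (X (Z.of_nat (k + h)))) with (Dv a X k h).
  rewrite (Dv_eq_Wv a b X k Ha0 HAB h Hh).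
  set (E := vsumn (fun l => vscal (b l) (eps (Z.of_nat (k + (h - l))))) h).
  assert (ET : Tv k h = vadd E (Wv a b X k h)).
  { unfold Tv, E, Wv. rewrite <- vsumn_add. apply vsumn_ext. intros l _.
    rewrite <- vscal_distr_v. reflexivity. }
  assert (EE : msq E = s2 * rsum (fun l => b l ^ 2) h).
  { rewrite <- (msq_E eps b s2 Heps_unc Heps_var (Z.of_nat (k + h)) h). unfold E. f_equal.
    apply vsumn_ext. intros l Hl. f_equal. f_equal. lia. }
  assert (IT : ip E (Tv k h) = 0).
  { unfold E. rewrite ip_vsumn_l. apply rsum_zero. intros l Hl.
    rewrite ip_scal_l. unfold Tv. rewrite ip_vsumn_r. rewrite rsum_zero. ring.
    intros l' Hl'. rewrite ip_scal_r.
    rewrite (orth_rho X eps a b s2 Heps_unc Heps_var HXma HepsAR). ring. lia. }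
  rewrite ET in IT. rewrite ip_add_r in IT. fold (msq E) in IT.
  rewrite ET, msq_add. rewrite <- EE. lra.
Qed.

Variables (A1 B1 p q be et : R).
Hypothesis Ha_bd : forall j, (1 <= j)%nat -> Rabs (a j) <= A1 * Rpower (INR j) (- p).
Hypothesis Hb1 : forall j, Rabs (b j) <= B1 * Rpower (INR j + 1) (- q).
Hypothesis Het : 0 < et.
Hypothesis Hbe : 0 <= be <= q.
Hypothesis Hq : 2 * q - be = 1 + et.
Hypothesis Hq1 : q <= 1 + et.
Hypothesis Hp : 0 <= p.
Hypothesis HA1 : 0 <= A1.
Hypothesis Hga : 0 <= 1 + et - be <= p.
Hypothesis Hom : 0 <= 2 * p - (1 + et - be) - 1 - et.

Lemma HB1 : 0 <= B1.
Proof. pose proof (Rabs_pos (b 0%nat)). pose proof (Hb1 0%nat). pose proof (rpow_pos (INR 0 + 1) (-q)).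
  destruct (Rle_dec 0 B1); auto. nra. Qed.

Definition Kc h := B1 * (1 + / et) * Rpower (INR h) (1 + et - q) * A1.

Definition Bd k h := (Kc h * Kc h * CB s2 B1 et) *
   (2 * ((1 + / et) * (1 + / et)) * Rpower (INR k) (- (2 * p - (1 + et - be) - 1 - et))).

Lemma cov_Y i j : Rabs (ip (X (- Z.of_nat i)%Z) (X (- Z.of_nat j)%Z)) <=
   CB s2 B1 et * Rpower (INR (ndist i j) + 1) (- be).
Proof.
  destruct (le_lt_dec i j).
  - rewrite ip_sym. replace (- Z.of_nat i)%Z with (- Z.of_nat j + Z.of_nat (j - i))%Z by lia.
    replace (ndist i j) with (j - i)%nat by (unfold ndist; lia).
    apply (cov_bound X eps b s2 Heps_unc Heps_var Hs2 HXma B1 q be et Hb1 Het Hbe Hq).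
  - replace (- Z.of_nat j)%Z with (- Z.of_nat i + Z.of_nat (i - j))%Z by lia.
    replace (ndist i j) with (i - j)%nat by (unfold ndist; lia).
    apply (cov_bound X eps b s2 Heps_unc Heps_var Hs2 HXma B1 q be et Hb1 Het Hbe Hq).
Qed.

Lemma QQ_bound k h N : (1 <= k)%nat -> (1 <= h)%nat ->
  msq (vsumn (fun l => vscal (b l) (vsumn (fun i => vscal (a (h - l + k + i)%nat)
        (X (Z.of_nat (k + (h - l)) - Z.of_nat (h - l + k + i))%Z)) (S N - (h - l + k)))) h)
  <= Bd k h.
Proof.
  intros Hk Hh.
  rewrite (vsumn_ext _ (fun l => vscal (b l) (vsumn (fun i => vscal (a (h - l + k + i)%nat)
        (X (- Z.of_nat i)%Z)) (S N - (h - l + k))))).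
  2:{ intros l Hl. f_equal. apply vsumn_ext. intros i _. f_equal. f_equal. lia. }
  rewrite (double_to_single b (fun l i => a (h - l + k + i)%nat) (fun l => (S N - (h - l + k))%nat)
            (fun i => X (- Z.of_nat i)%Z) h (S N)) by (intros; lia).
  assert (Hc0 : 0 < 1 + / et) by (pose proof (Rinv_0_lt_compat et Het); lra).
  assert (HKc : 0 <= Kc h) by (unfold Kc; pose proof HB1; pose proof (rpow_pos (INR h) (1+et-q));
                               repeat apply Rmult_le_pos; lra).
  eapply Rle_trans.
  apply (msq_lin_bound _ (fun i => Kc h * Rpower (INR k + INR i + 1) (- p))
                         (fun i j => CB s2 B1 et * Rpower (INR (ndist i j) + 1) (- be))).
  - intros i. eapply Rle_trans. apply rsum_abs.
    apply Rle_trans with (rsum (fun l => B1 * Rpower (INR l + 1) (- q) * (A1 * Rpower (INR k + INR i + 1) (- p))) h).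
    + apply rsum_le. intros l Hl. rewrite Rabs_mult. apply Rmult_le_compat; auto using Rabs_pos.
      destruct (i <? S N - (h - l + k))%nat.
      * eapply Rle_trans. apply Ha_bd. lia. apply Rmult_le_compat_l; auto. apply rpow_dec; auto.
        split. pose proof (pos_INR k); pose proof (pos_INR i); lra.
        replace (h - l + k + i)%nat with (S (k + i) + (h - l - 1))%nat by lia.
        rewrite plus_INR, S_INR, plus_INR. pose proof (pos_INR (h - l - 1)). lra. lra.
      * rewrite Rabs_R0. pose proof (rpow_pos (INR k + INR i + 1) (-p)). nra.
    + rewrite (rsum_ext _ (fun l => (B1 * (A1 * Rpower (INR k + INR i + 1) (- p))) * Rpower (INR l + 1) (- q)))
        by (intros; ring).
      rewrite rsum_scal. unfold Kc.
      pose proof (psum_q q et h Het Hq1). pose proof HB1.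
      pose proof (rpow_pos (INR k + INR i + 1) (-p)).
      assert (0 <= B1 * (A1 * Rpower (INR k + INR i + 1) (- p))) by (repeat apply Rmult_le_pos; lra).
      apply Rle_trans with (B1 * (A1 * Rpower (INR k + INR i + 1) (- p)) *
                            ((1 + / et) * Rpower (INR h) (1 + et - q))).
      apply Rmult_le_compat_l; auto. right; ring.
  - intros i j. apply cov_Y.
  - rewrite (rsum_ext _ (fun i => (Kc h * Kc h * CB s2 B1 et) *
        rsum (fun j => Rpower (INR k + INR i + 1) (- p) * Rpower (INR k + INR j + 1) (- p)
        * Rpower (INR (ndist i j) + 1) (- be)) (S N))).
    2:{ intros i _. rewrite <- rsum_scal. apply rsum_ext. intros j _. ring. }
    rewrite rsum_scal. unfold Bd. apply Rmult_le_compat_l.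
    unfold CB. pose proof HB1. pose proof (Rle_0_sqr (Kc h)). unfold Rsqr in *.
    apply Rmult_le_pos; [nra|]. apply Rmult_le_pos; [apply Rmult_le_pos; nra | lra].
    apply dsum_bound; auto. replace 1 with (INR 1) by reflexivity. apply le_INR; auto. lra.
Qed.

Lemma T_bound k h : (1 <= k)%nat -> (1 <= h)%nat -> msq (Tv k h) <= Bd k h.
Proof.
  intros Hk Hh.
  assert (HBd : 0 <= Bd k h).
  { eapply Rle_trans; [|apply (QQ_bound k h 0%nat Hk Hh)]. apply msq_pos. }
  set (res := fun l N => vsub (eps (Z.of_nat (k + (h - l))))
      (vsumn (fun j => vscal (a j) (X (Z.of_nat (k + (h - l)) - Z.of_nat j)%Z)) (S N))).
  assert (Hn : nrm (Tv k h) <= sqrt (Bd k h)).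
  { apply (le_of_forall _ _ (rsum (fun l => Rabs (b l)) h)).
    { apply rsum_nonneg. intros; apply Rabs_pos. }
    intros t Ht.
    destruct (fin_unif (fun l N0 => forall N, (N >= N0)%nat -> nrm (res l N) < t) h) as [N0 HN0].
    - intros l N1 N2 H12 HP N HN. apply HP. lia.
    - intros l _. apply (cv_nrm _ _ (HepsAR (Z.of_nat (k + (h - l)))) t Ht).
    - set (N := Nat.max N0 (h + k)).
      assert (ET : Tv k h = vadd (vsumn (fun l => vscal (b l) (res l N)) h)
         (vsumn (fun l => vscal (b l) (vsumn (fun i => vscal (a (h - l + k + i)%nat)
            (X (Z.of_nat (k + (h - l)) - Z.of_nat (h - l + k + i))%Z)) (S N - (h - l + k)))) h)).
      { unfold Tv. rewrite <- vsumn_add. apply vsumn_ext. intros l Hl.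
        rewrite (rho_split X eps a _ (h - l + k) N) by (unfold N; lia). apply vscal_distr_v. }
      rewrite ET. eapply Rle_trans. apply nrm_add. rewrite Rplus_comm. apply Rplus_le_compat.
      + unfold nrm at 1. apply sqrt_le_1_alt. apply QQ_bound; auto.
      + eapply Rle_trans. apply nrm_vsumn. rewrite <- rsum_scal.
        apply rsum_le. intros l Hl. rewrite nrm_scal.
        assert (nrm (res l N) < t) by (apply (HN0 l N Hl); unfold N; lia).
        pose proof (Rabs_pos (b l)). nra. }
  pose proof (msq_le_of_nrm _ _ (sqrt_pos _) Hn). rewrite sqrt_sqrt in H0; auto.
Qed.
End Main.

Lemma pow_shift x q : 1 <= x -> 0 <= q -> Rpower x (- q) <= Rpower 2 q * Rpower (x + 1) (- q).
Proof.
  intros Hx Hq. rewrite !Rpower_Ropp.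
  assert (Rpower (x + 1) q <= Rpower 2 q * Rpower x q).
  { rewrite Rpower_mult_distr by lra. apply Rle_Rpower_l; lra. }
  pose proof (rpow_pos (x+1) q). pose proof (rpow_pos x q). pose proof (rpow_pos 2 q).
  apply (Rmult_le_reg_r (Rpower x q * Rpower (x+1) q)). nra.
  field_simplify; try lra.
Qed.

Theorem proposition2
  (d : R) (Hd : 0 < d < 1/2)
  (H : IPSpace) (one : H) (Hone : msq one = 1)
  (X eps : Z -> H) (sigma : Z -> R) (s2 : R) (a b : nat -> R)
  (* zero mean *)
  (HXmean : forall n, ip (X n) one = 0)
  (* weak stationarity, sigma = autocovariance *)
  (Hstat : forall n j, ip (X n) (X (n + j)%Z) = sigma j)
  (* sum_j |sigma(j)| = infinity *)
  (Hlong : forall M : R, exists N : nat,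
      M < sum_f_R0 (fun i => Rabs (sigma (Z.of_nat i)) + Rabs (sigma (- Z.of_nat i)%Z)) N)
  (* innovations: uncorrelated, mean 0, variance s2 > 0 *)
  (Hepsmean : forall n, ip (eps n) one = 0)
  (Heps_unc : forall n m, n <> m -> ip (eps n) (eps m) = 0)
  (Heps_var : forall n, msq (eps n) = s2)
  (Hs2 : 0 < s2)
  (* MA(infinity) representation *)
  (Hb0 : b 0%nat = 1)
  (Hb2 : exists l, Un_cv (fun N => sum_f_R0 (fun j => (b j) ^ 2) N) l)
  (HXma : forall n, Un_cv (fun N =>
      msq (vsub (X n) (vsumn (fun j => vscal (b j) (eps (n - Z.of_nat j)%Z)) (S N)))) 0)
  (* AR(infinity) representation *)
  (Ha0 : a 0%nat = 1)
  (Ha1 : exists l, Un_cv (fun N => sum_f_R0 (fun j => Rabs (a j)) N) l)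
  (HepsAR : forall n, Un_cv (fun N =>
      msq (vsub (eps n) (vsumn (fun j => vscal (a j) (X (n - Z.of_nat j)%Z)) (S N)))) 0)
  (* A(z) B(z) = 1 as power series (Cauchy product coefficients) *)
  (HAB : forall n, sum_f_R0 (fun i => a i * b (n - i)%nat) n = if (n =? 0)%nat then 1 else 0)
  (* coefficient decay *)
  (Hadec : forall delta, 0 < delta -> exists C1, forall j : nat, (1 <= j)%nat ->
      Rabs (a j) <= C1 * Rpower (INR j) (- d - 1 + delta))
  (Hbdec : forall delta, 0 < delta -> exists C2, forall j : nat, (1 <= j)%nat ->
      Rabs (b j) <= C2 * Rpower (INR j) (d - 1 + delta)) :
  forall delta, 0 < delta -> exists C, forall k h : nat, (1 <= k)%nat -> (1 <= h)%nat ->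
    Rabs (msq (vsub (predictor a X k h) (X (Z.of_nat (k + h))))
          - s2 * sum_f_R0 (fun l => (b l) ^ 2) (h - 1))
    <= C * Rpower (INR h) (2 * d + delta) * Rpower (INR k) (-1 + delta).
Proof.
  intros delta Hdelta.
  set (eta := Rmin (delta / 7) (Rmin ((1 - 2 * d) / 6) (1 / 8))).
  assert (He1 : eta <= delta / 7) by apply Rmin_l.
  assert (He2 : eta <= (1 - 2 * d) / 6) by (eapply Rle_trans; [apply Rmin_r | apply Rmin_l]).
  assert (He3 : eta <= 1 / 8) by (eapply Rle_trans; [apply Rmin_r | apply Rmin_r]).
  assert (He0 : 0 < eta).
  { unfold eta. apply Rmin_glb_lt. lra. apply Rmin_glb_lt; lra. }
  destruct (Hadec eta He0) as [C1 HC1]. destruct (Hbdec eta He0) as [C2 HC2].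
  set (p := 1 + d - eta). set (q := 1 - d - eta). set (be := 1 - 2 * d - 3 * eta).
  set (A1 := Rabs C1). set (B1 := Rmax 1 (Rabs C2 * Rpower 2 q)).
  assert (Ha_bd : forall j, (1 <= j)%nat -> Rabs (a j) <= A1 * Rpower (INR j) (- p)).
  { intros j Hj. eapply Rle_trans. apply HC1; auto.
    replace (- d - 1 + eta) with (- p) by (unfold p; ring).
    apply Rmult_le_compat_r. left; apply rpow_pos. apply Rle_abs. }
  assert (Hb1 : forall j, Rabs (b j) <= B1 * Rpower (INR j + 1) (- q)).
  { intros [|j].
    - rewrite Hb0, Rabs_R1. simpl. replace (0 + 1) with 1 by ring.
      unfold Rpower. rewrite ln_1, Rmult_0_r, exp_0, Rmult_1_r. apply Rmax_l.
    - eapply Rle_trans. apply HC2; lia.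
      replace (d - 1 + eta) with (- q) by (unfold q; ring).
      assert (1 <= INR (S j)) by (rewrite S_INR; pose proof (pos_INR j); lra).
      pose proof (pow_shift (INR (S j)) q H0 ltac:(unfold q; lra)).
      pose proof (rpow_pos (INR (S j)) (-q)). pose proof (rpow_pos (INR (S j) + 1) (-q)).
      apply Rle_trans with (Rabs C2 * Rpower (INR (S j)) (- q)).
      apply Rmult_le_compat_r. lra. apply Rle_abs.
      apply Rle_trans with (Rabs C2 * (Rpower 2 q * Rpower (INR (S j) + 1) (- q))).
      apply Rmult_le_compat_l. apply Rabs_pos. auto.
      rewrite <- Rmult_assoc. apply Rmult_le_compat_r. lra. apply Rmax_r. }
  exists ((B1 * (1 + / eta) * A1) * (B1 * (1 + / eta) * A1) * CB s2 B1 eta * (2 * ((1 + / eta) * (1 + / eta)))).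
  intros k h Hk Hh.
  rewrite (core X eps a b s2 Heps_unc Heps_var HXma HepsAR Ha0 HAB k h Hk Hh).
  replace (h - 1)%nat with (pred h) by lia. rewrite <- rsum_sum_f.
  replace (S (pred h)) with h by lia.
  replace (s2 * rsum (fun l : nat => b l ^ 2) h + msq (Tv X eps a b k h) - s2 * rsum (fun l : nat => b l ^ 2) h)
    with (msq (Tv X eps a b k h)) by ring.
  rewrite Rabs_right by (apply Rle_ge, msq_pos).
  eapply Rle_trans.
  apply (T_bound X eps a b s2 Heps_unc Heps_var Hs2 HXma HepsAR A1 B1 p q be eta Ha_bd Hb1 He0);
    try assumption; unfold p, q, be, A1; try split; try lra; try apply Rabs_pos.
  unfold Bd, Kc.
  assert (Hhr : 1 <= INR h) by (replace 1 with (INR 1) by reflexivity; apply le_INR; auto).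
  assert (Hkr : 1 <= INR k) by (replace 1 with (INR 1) by reflexivity; apply le_INR; auto).
  set (Ph := Rpower (INR h) (1 + eta - q)).
  set (Pk := Rpower (INR k) (- (2 * p - (1 + eta - be) - 1 - eta))).
  assert (EPh : Ph * Ph <= Rpower (INR h) (2 * d + delta)).
  { unfold Ph. rewrite <- Rpower_plus. apply Rle_Rpower; auto. unfold q. lra. }
  assert (EPk : Pk <= Rpower (INR k) (-1 + delta)).
  { unfold Pk. apply Rle_Rpower; auto. unfold p, be. lra. }
  set (K0 := B1 * (1 + / eta) * A1).
  assert (HB1 : 0 <= B1) by (unfold B1; eapply Rle_trans; [|apply Rmax_l]; lra).
  assert (Hc0 : 0 < 1 + / eta) by (pose proof (Rinv_0_lt_compat eta He0); lra).
  assert (HK0 : 0 <= K0) by (unfold K0, A1; pose proof (Rabs_pos C1); repeat apply Rmult_le_pos; lra).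
  assert (HCB : 0 <= CB s2 B1 eta) by (unfold CB; repeat apply Rmult_le_pos; nra).
  assert (E : B1 * (1 + / eta) * Ph * A1 = K0 * Ph) by (unfold K0; ring).
  rewrite E.
  pose proof (rpow_pos (INR h) (2 * d + delta)) as P1. pose proof (rpow_pos (INR k) (-1 + delta)) as P2.
  assert (P3 : 0 < Ph) by apply rpow_pos. assert (P4 : 0 < Pk) by apply rpow_pos.
  set (Z2 := 2 * ((1 + / eta) * (1 + / eta))).
  assert (HZ2 : 0 <= Z2) by (unfold Z2; nra).
  replace (K0 * Ph * (K0 * Ph) * CB s2 B1 eta * (Z2 * Pk)) with
     ((K0 * K0 * CB s2 B1 eta * Z2) * ((Ph * Ph) * Pk)) by ring.
  replace (K0 * K0 * CB s2 B1 eta * Z2 * Rpower (INR h) (2 * d + delta) * Rpower (INR k) (-1 + delta))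
    with ((K0 * K0 * CB s2 B1 eta * Z2) * (Rpower (INR h) (2 * d + delta) * Rpower (INR k) (-1 + delta))) by ring.
  apply Rmult_le_compat_l. apply Rmult_le_pos; [apply Rmult_le_pos; [nra | exact HCB] | exact HZ2].
  apply Rmult_le_compat; try nra.
Qed.
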